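(* Let $X, Y \subseteq \omega$. If there exists an embedding $f : \mathcal{G}^X \hookrightarrow \mathcal{K}_2^Y$ then every $Z \le_e X$ is $Y$-computable.
   Context: A pca is a set with a partial binary application operation containing distinct $\mathrm{s},\mathrm{k}$ with $\mathrm{k}ab\downarrow=a$, $\mathrm{s}ab\downarrow$, $\mathrm{s}abc\simeq(ac)(bc)$. An embedding of pcas is an injective map $f$ with: if $ab$ is defined then $f(a)f(b)$ is defined and equals $f(ab)$. Scott's graph model: on $\mathcal{P}(\omega)$, $A\cdot B=\{n:\exists u\,(\langle n,u\rangle\in A\wedge D_u\subseteq B)\}$, with $\langle\cdot,\cdot\rangle$ a bijective computable pairing, $\langle 0,0\rangle=0$, and $D_u$ the finite set with canonical code $u$. $\mathcal{G}^X$ is the least class containing $X$ and all c.e. sets and closed under this application (equivalently, all sets $\le_e X$). $Z\le_e X$ means there is a c.e. relation $R$ with $x\in Z\iff\exists u\,(R(x,u)\wedge D_u\subseteq X)$. $\mathcal{K}_2^Y$: elements are the total $Y$-computable functions $g:\omega\to\omega$, with $g\cdot h$ the function $n\mapsto\Phi^{g\oplus h}_{g(0)}(n)$ ($\Phi_e$ the $e$-th Turing functional, $(g\oplus h)(2n)=g(n)$, $(g\oplus h)(2n+1)=h(n)$), defined if and only if this function is total. *)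

(* Defs.v *)
From HB Require Import structures.
From mathcomp Require Import all_boot.
Set Implicit Arguments. Unset Strict Implicit. Unset Printing Implicit Defensive.

Definition pair (x y : nat) : nat := ((x + y) * (x + y).+1)./2 + y.

(* Programs for unary partial recursive functionals (with pairing),
   relative to an oracle g : nat -> nat. *)
Inductive prog : Type :=
| PZero | PSucc | PId | PFst | PSnd | POrc
| PPair of prog & prog
| PComp of prog & prog
| PRec of prog & prog
| PMin of prog.

Inductive eval (g : nat -> nat) : prog -> nat -> nat -> Prop :=
| ev_zero x : eval g PZero x 0
| ev_succ x : eval g PSucc x x.+1
| ev_id x : eval g PId x x
| ev_fst x y : eval g PFst (pair x y) x
| ev_snd x y : eval g PSnd (pair x y) y
| ev_orc x : eval g POrc x (g x)
| ev_pair p q x a b : eval g p x a -> eval g q x b -> eval g (PPair p q) x (pair a b)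
| ev_comp p q x y z : eval g q x y -> eval g p y z -> eval g (PComp p q) x z
| ev_rec0 p q a v : eval g p a v -> eval g (PRec p q) (pair a 0) v
| ev_recS p q a k w v : eval g (PRec p q) (pair a k) w ->
    eval g q (pair a (pair k w)) v -> eval g (PRec p q) (pair a k.+1) v
| ev_min p x n : eval g p (pair x n) 0 ->
    (forall m, m < n -> exists v, v <> 0 /\ eval g p (pair x m) v) ->
    eval g (PMin p) x n.

(* Goedel numbering of programs via MathComp's countable structure. *)
Fixpoint tree_of_prog (p : prog) : GenTree.tree nat :=
  match p with
  | PZero => GenTree.Node 0 [::]
  | PSucc => GenTree.Node 1 [::]
  | PId => GenTree.Node 2 [::]
  | PFst => GenTree.Node 3 [::]
  | PSnd => GenTree.Node 4 [::]
  | POrc => GenTree.Node 5 [::]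
  | PPair p q => GenTree.Node 6 [:: tree_of_prog p; tree_of_prog q]
  | PComp p q => GenTree.Node 7 [:: tree_of_prog p; tree_of_prog q]
  | PRec p q => GenTree.Node 8 [:: tree_of_prog p; tree_of_prog q]
  | PMin p => GenTree.Node 9 [:: tree_of_prog p]
  end.

Fixpoint prog_of_tree (t : GenTree.tree nat) : option prog :=
  match t with
  | GenTree.Node 0 [::] => Some PZero
  | GenTree.Node 1 [::] => Some PSucc
  | GenTree.Node 2 [::] => Some PId
  | GenTree.Node 3 [::] => Some PFst
  | GenTree.Node 4 [::] => Some PSnd
  | GenTree.Node 5 [::] => Some POrc
  | GenTree.Node 6 [:: a; b] =>
      match prog_of_tree a, prog_of_tree b with
      | Some p, Some q => Some (PPair p q) | _, _ => None end
  | GenTree.Node 7 [:: a; b] =>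
      match prog_of_tree a, prog_of_tree b with
      | Some p, Some q => Some (PComp p q) | _, _ => None end
  | GenTree.Node 8 [:: a; b] =>
      match prog_of_tree a, prog_of_tree b with
      | Some p, Some q => Some (PRec p q) | _, _ => None end
  | GenTree.Node 9 [:: a] =>
      match prog_of_tree a with Some p => Some (PMin p) | None => None end
  | _ => None
  end.

Lemma tree_of_progK : pcancel tree_of_prog prog_of_tree.
Proof. by elim=> //= p -> // q ->. Qed.

HB.instance Definition _ := PCanIsCountable tree_of_progK.

(* Phi_e : the e-th Turing functional (index e decodes to a program;
   non-codes denote the constant-zero program). *)
Definition Phi (e : nat) : prog :=
  match (unpickle e : option prog) with Some p => p | None => PZero end.

Definition join (g h : nat -> nat) (n : nat) : nat :=
  if odd n then h n./2 else g n./2.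

Definition chi (Y : nat -> bool) (n : nat) : nat := nat_of_bool (Y n).

(* Canonical finite sets: D_u = { i | bit i of u is 1 }. *)
Definition Dmem (u i : nat) : Prop := odd (u %/ 2 ^ i).
Definition Dsub (u : nat) (B : nat -> Prop) : Prop := forall i, Dmem u i -> B i.

(* c.e. sets and relations: domains of (oracle-free) partial recursive functions. *)
Definition ce (A : nat -> Prop) : Prop :=
  exists p, forall n, A n <-> exists v, eval (fun _ => 0) p n v.
Definition ce_rel (R : nat -> nat -> Prop) : Prop :=
  exists p, forall x u, R x u <-> exists v, eval (fun _ => 0) p (pair x u) v.

Definition enum_le (Z : nat -> Prop) (X : nat -> bool) : Prop :=
  exists R, ce_rel R /\ forall x, Z x <-> exists u, R x u /\ Dsub u (fun i => X i).

Definition gapp (A B : nat -> Prop) : nat -> Prop :=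
  fun n => exists u, A (pair n u) /\ Dsub u B.

(* G^X : least class containing X, all c.e. sets, closed under application
   (membership taken up to extensional equality of sets). *)
Inductive GX (X : nat -> bool) : (nat -> Prop) -> Prop :=
| GX_X A : (forall n, A n <-> X n) -> GX X A
| GX_ce A : ce A -> GX X A
| GX_app A B C : GX X B -> GX X C -> (forall n, A n <-> gapp B C n) -> GX X A.

(* Total Y-computable functions (elements of K_2^Y). *)
Definition Ycomputable_fun (Y : nat -> bool) (g : nat -> nat) : Prop :=
  exists p, forall n, eval (chi Y) p n (g n).

Definition Ycomputable_set (Y : nat -> bool) (Z : nat -> Prop) : Prop :=
  exists p, forall n, (Z n -> eval (chi Y) p n 1) /\ (~ Z n -> eval (chi Y) p n 0).

Definition K2app_is (g h k : nat -> nat) : Prop :=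
  forall n, eval (join g h) (Phi (g 0)) n (k n).

(* An embedding of pcas G^X -> K_2^Y (application in G^X is total). *)
Definition pca_embedding (X Y : nat -> bool) (f : (nat -> Prop) -> (nat -> nat)) : Prop :=
  [/\ (forall A, GX X A -> Ycomputable_fun Y (f A)),
      (forall A B, GX X A -> GX X B -> (forall n, f A n = f B n) ->
         forall n, A n <-> B n)
    & (forall A B, GX X A -> GX X B -> K2app_is (f A) (f B) (f (gapp A B)))].

(* Main.v *)
Require Import Defs.
From mathcomp Require Import all_boot zify.
Set Implicit Arguments. Unset Strict Implicit.


Lemma pair_ge x y : x + y <= pair x y.
Proof. rewrite /pair -divn2. nia. Qed.

Definition nextp (xy : nat * nat) : nat * nat :=
  if xy.1 is x'.+1 then (x', xy.2.+1) else (xy.2.+1, 0).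

Lemma pair_next x y : pair (nextp (x,y)).1 (nextp (x,y)).2 = (pair x y).+1.
Proof.
case: x => [|x] /=; rewrite /pair -!divn2.
- rewrite !addn0 add0n.
  have -> : (y.+1 * y.+2) = y * y.+1 + y.+1 * 2 by nia.
  nia.
- have -> : x + y.+1 = x.+1 + y by lia. lia.
Qed.

Fixpoint unp n := match n with 0 => (0,0) | n'.+1 => nextp (unp n') end.

Lemma pair_unp n : pair (unp n).1 (unp n).2 = n.
Proof. elim: n => //= n IH. case E: (unp n) => [a b]. by rewrite pair_next -IH E. Qed.

Lemma unp_pair x y : unp (pair x y) = (x, y).
Proof.
move E: (pair x y) => n. elim: n x y E => [|n IH] x y E.
- have := pair_ge x y. rewrite E. case: x {E} => // ; case: y => //.
- case: y E => [|y] E.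
  + case: x E => [|x] E; first by move: E; rewrite /pair.
    have h := pair_next 0 x. rewrite /= E in h. case: h => h.
    by rewrite /= (IH _ _ (esym h)).
  + have h := pair_next x.+1 y. rewrite /= E in h. case: h => h.
    by rewrite /= (IH _ _ (esym h)).
Qed.

Definition u1 n := (unp n).1.
Definition u2 n := (unp n).2.
Lemma u1_pair x y : u1 (pair x y) = x. Proof. by rewrite /u1 unp_pair. Qed.
Lemma u2_pair x y : u2 (pair x y) = y. Proof. by rewrite /u2 unp_pair. Qed.
Lemma pair_u n : pair (u1 n) (u2 n) = n. Proof. exact: pair_unp. Qed.
Lemma pair_inj x y x' y' : pair x y = pair x' y' -> x = x' /\ y = y'.
Proof. move=> h. have := unp_pair x y. rewrite h unp_pair. by case=> -> ->. Qed.
Lemma pair00 : pair 0 0 = 0. Proof. by []. Qed.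
Arguments pair : simpl never.
Arguments u1 : simpl never.
Arguments u2 : simpl never.


Lemma eval_ind2 (g : nat -> nat) (Q : prog -> nat -> nat -> Prop)
 (hz : forall x, Q PZero x 0) (hs : forall x, Q PSucc x x.+1) (hi : forall x, Q PId x x)
 (hf : forall x y, Q PFst (pair x y) x) (hsn : forall x y, Q PSnd (pair x y) y)
 (ho : forall x, Q POrc x (g x))
 (hp : forall p q x a b, eval g p x a -> Q p x a -> eval g q x b -> Q q x b -> Q (PPair p q) x (pair a b))
 (hc : forall p q x y z, eval g q x y -> Q q x y -> eval g p y z -> Q p y z -> Q (PComp p q) x z)
 (hr0 : forall p q a v, eval g p a v -> Q p a v -> Q (PRec p q) (pair a 0) v)
 (hrS : forall p q a k w v, eval g (PRec p q) (pair a k) w -> Q (PRec p q) (pair a k) w ->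
     eval g q (pair a (pair k w)) v -> Q q (pair a (pair k w)) v -> Q (PRec p q) (pair a k.+1) v)
 (hm : forall p x n, eval g p (pair x n) 0 -> Q p (pair x n) 0 ->
     (forall m, m < n -> exists v, v <> 0 /\ eval g p (pair x m) v /\ Q p (pair x m) v) ->
     Q (PMin p) x n) :
 forall p x v, eval g p x v -> Q p x v.
Proof.
fix F 4. move=> p x v d; case: d.
- exact: hz.
- exact: hs.
- exact: hi.
- exact: hf.
- exact: hsn.
- exact: ho.
- move=> p0 q x0 a b d1 d2. exact: (hp _ _ _ _ _ d1 (F _ _ _ d1) d2 (F _ _ _ d2)).
- move=> p0 q x0 y z d1 d2. exact: (hc _ _ _ _ _ d1 (F _ _ _ d1) d2 (F _ _ _ d2)).
- move=> p0 q a v0 d1. exact: (hr0 _ q _ _ d1 (F _ _ _ d1)).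
- move=> p0 q a k w v0 d1 d2. exact: (hrS _ _ _ _ _ _ d1 (F _ _ _ d1) d2 (F _ _ _ d2)).
- move=> p0 x0 n d1 H. apply: (hm _ _ _ d1 (F _ _ _ d1)).
  move=> m hm'. case: (H m hm') => v' [hv d']. exists v'. split => //. split => //.
  exact: (F _ _ _ d').
Qed.

Ltac pinj := repeat match goal with H : pair _ _ = pair _ _ |- _ =>
  let a := fresh in let b := fresh in case: (pair_inj H) => a b; clear H; subst end.

Lemma eval_det g p x v : eval g p x v -> forall v', eval g p x v' -> v = v'.
Proof.
move: p x v; apply: eval_ind2.
- by move=> x v' h; inversion h.
- by move=> x v' h; inversion h.
- by move=> x v' h; inversion h.
- move=> x y v' h; inversion h; subst; pinj; done.
- move=> x y v' h; inversion h; subst; pinj; done.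
- by move=> x v' h; inversion h.
- move=> p q x a b _ IH1 _ IH2 v' h; inversion h; subst.
  match goal with H : eval _ p _ _, H' : eval _ q _ _ |- _ => by rewrite (IH1 _ H) (IH2 _ H') end.
- move=> p q x y z _ IH1 _ IH2 v' h; inversion h; subst.
  match goal with H : eval _ q _ _ |- _ => have e := IH1 _ H end; subst. exact: IH2.
- move=> p q a v _ IH v' h; inversion h; subst; pinj.
  + exact: IH.
  + by [].
- move=> p q a k w v _ IH1 _ IH2 v' h; inversion h; subst; pinj.
  + by [].
  + case: H0 => ?; subst. match goal with H : eval _ (PRec _ _) _ _ |- _ => have e := IH1 _ H end; subst.
    exact: IH2.
- move=> p x n _ IH H v' h; inversion h; subst.
  case: (ltngtP n v') => // c.
  + case: (H2 n c) => w [hw dw].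
    by have e := IH _ dw; rewrite -e in hw.
  + case: (H v' c) => w [hw [_ Qw]]. by have e := Qw _ H1; rewrite e in hw.

Qed.

Definition pc (O : nat -> nat) (F : nat -> nat) := exists p, forall x, eval O p x (F x).

Lemma comp_ext O F G : (forall x, F x = G x) -> pc O F -> pc O G.
Proof. move=> e [p h]; exists p => x; rewrite -e; exact: h. Qed.

Lemma comp_id O : pc O (fun s => s).
Proof. exists PId => x; constructor. Qed.

Lemma comp_const O c : pc O (fun _ => c).
Proof.
elim: c => [|c [p h]]; first by exists PZero => x; constructor.
exists (PComp PSucc p) => x; econstructor; [exact: h| constructor].
Qed.

Lemma comp_comp O F G : pc O F -> pc O G -> pc O (fun s => F (G s)).
Proof. move=> [p hp] [q hq]; exists (PComp p q) => x; econstructor; eauto. Qed.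

Lemma comp_u1 O F : pc O F -> pc O (fun s => u1 (F s)).
Proof.
move=> [p hp]; exists (PComp PFst p) => x; econstructor; first exact: hp.
rewrite -{1}(pair_u (F x)); constructor.
Qed.

Lemma comp_u2 O F : pc O F -> pc O (fun s => u2 (F s)).
Proof.
move=> [p hp]; exists (PComp PSnd p) => x; econstructor; first exact: hp.
rewrite -{1}(pair_u (F x)); constructor.
Qed.

Lemma comp_pair O F G : pc O F -> pc O G -> pc O (fun s => pair (F s) (G s)).
Proof. move=> [p hp] [q hq]; exists (PPair p q) => x; constructor; eauto. Qed.

Lemma comp_succ O F : pc O F -> pc O (fun s => (F s).+1).
Proof. move=> [p hp]; exists (PComp PSucc p) => x; econstructor; eauto; constructor. Qed.

Lemma comp_orc O F : pc O F -> pc O (fun s => O (F s)).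
Proof. move=> [p hp]; exists (PComp POrc p) => x; econstructor; eauto; constructor. Qed.

Fixpoint prf (b st : nat -> nat) (a k : nat) : nat :=
  if k is k'.+1 then st (pair a (pair k' (prf b st a k'))) else b a.

Lemma comp_prf0 O b st : pc O b -> pc O st -> pc O (fun x => prf b st (u1 x) (u2 x)).
Proof.
move=> [pb hb] [ps hs]; exists (PRec pb ps) => x.
rewrite -{1}(pair_u x); elim: (u2 x) => [|k IH] /=; first by constructor.
econstructor; [exact: IH | exact: hs].
Qed.

Lemma comp_prf O b st F G : pc O b -> pc O st -> pc O F -> pc O G ->
  pc O (fun x => prf b st (F x) (G x)).
Proof.
move=> hb hs hF hG.
have := comp_comp (comp_prf0 hb hs) (comp_pair hF hG).
by apply: comp_ext => x; rewrite u1_pair u2_pair.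
Qed.

Definition cond c a b := prf (fun t => u1 t) (fun t => u2 (u1 t)) (pair a b) c.
Lemma condE c a b : cond c a b = if c == 0 then a else b.
Proof. by case: c => [|c]; rewrite /cond /= ?u1_pair ?u2_pair. Qed.

Lemma comp_if0 O C A B : pc O C -> pc O A -> pc O B ->
  pc O (fun s => if C s == 0 then A s else B s).
Proof.
move=> hC hA hB.
have : pc O (fun s => cond (C s) (A s) (B s)).
  rewrite /cond; apply: comp_prf; [apply: comp_u1; apply: comp_id | apply: comp_u2; apply: comp_u1; apply: comp_id | exact: comp_pair | exact: hC].
by apply: comp_ext => x; rewrite condE.
Qed.

Lemma predE a k : prf (fun _ => 0) (fun t => u1 (u2 t)) a k = k.-1.
Proof. by case: k => //= k; rewrite u2_pair u1_pair. Qed.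

Lemma comp_pred O F : pc O F -> pc O (fun s => (F s).-1).
Proof.
move=> hF. have : pc O (fun s => prf (fun _ => 0) (fun t => u1 (u2 t)) 0 (F s)).
  apply: comp_prf; [exact: comp_const | apply: comp_u1; apply: comp_u2; exact: comp_id | exact: comp_const | exact: hF].
by apply: comp_ext => x; rewrite predE.
Qed.

Lemma subE a k : prf (fun t => t) (fun t => (u2 (u2 t)).-1) a k = a - k.
Proof. elim: k => [|k IH] /=; first by rewrite subn0. rewrite !u2_pair IH; lia. Qed.

Lemma comp_sub O F G : pc O F -> pc O G -> pc O (fun s => F s - G s).
Proof.
move=> hF hG. have : pc O (fun s => prf (fun t => t) (fun t => (u2 (u2 t)).-1) (F s) (G s)).
  apply: comp_prf; [exact: comp_id | apply: comp_pred; apply: comp_u2; apply: comp_u2; exact: comp_id | exact: hF | exact: hG].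
by apply: comp_ext => x; rewrite subE.
Qed.

Lemma addE a k : prf (fun t => t) (fun t => (u2 (u2 t)).+1) a k = a + k.
Proof. elim: k => [|k IH] /=; first by rewrite addn0. rewrite !u2_pair IH; lia. Qed.

Lemma comp_add O F G : pc O F -> pc O G -> pc O (fun s => F s + G s).
Proof.
move=> hF hG. have : pc O (fun s => prf (fun t => t) (fun t => (u2 (u2 t)).+1) (F s) (G s)).
  apply: comp_prf; [exact: comp_id | apply: comp_succ; apply: comp_u2; apply: comp_u2; exact: comp_id | exact: hF | exact: hG].
by apply: comp_ext => x; rewrite addE.
Qed.

Lemma comp_ifeq O C D A B : pc O C -> pc O D -> pc O A -> pc O B ->
  pc O (fun s => if C s == D s then A s else B s).
Proof.
move=> hC hD hA hB.
have : pc O (fun s => if (C s - D s) + (D s - C s) == 0 then A s else B s).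
  by apply: comp_if0 => //; apply: comp_add; apply: comp_sub.
apply: comp_ext => x. congr (if _ then _ else _).
apply/eqP; case: eqP; lia.
Qed.

Definition hostep (t : nat) := pair (u1 (u2 (u2 t)) + u2 (u2 (u2 t))) (1 - u2 (u2 (u2 t))).
Lemma hoE a k : prf (fun _ => pair 0 0) hostep a k = pair k./2 (odd k).
Proof.
elim: k => [|k IH] //=. rewrite /hostep !u2_pair IH u1_pair u2_pair.
by rewrite uphalf_half; case: (odd k) => /=; rewrite ?addn0 ?addn1 // addnC.
Qed.

Lemma comp_ho O F : pc O F -> pc O (fun s => prf (fun _ => pair 0 0) hostep 0 (F s)).
Proof.
move=> hF. apply: comp_prf; [exact: comp_const | | exact: comp_const | exact: hF].
rewrite /hostep. apply: comp_pair.
- apply: comp_add.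
  + apply: comp_u1; apply: comp_u2; apply: comp_u2; exact: comp_id.
  + apply: comp_u2; apply: comp_u2; apply: comp_u2; exact: comp_id.
- apply: comp_sub; first exact: comp_const. apply: comp_u2; apply: comp_u2; apply: comp_u2; exact: comp_id.
Qed.

Lemma comp_half O F : pc O F -> pc O (fun s => (F s)./2).
Proof.
move=> hF. have := comp_u1 (comp_ho hF). by apply: comp_ext => x; rewrite hoE u1_pair.
Qed.

Lemma comp_ifodd O F A B : pc O F -> pc O A -> pc O B ->
  pc O (fun s => if odd (F s) then A s else B s).
Proof.
move=> hF hA hB.
have := comp_if0 (comp_u2 (comp_ho hF)) hB hA.
apply: comp_ext => x; rewrite hoE u2_pair. by case: (odd (F x)).
Qed.


Fixpoint cp (p : prog) : nat :=
  match p with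
  | PZero => pair 0 0 | PSucc => pair 1 0 | PId => pair 2 0 | PFst => pair 3 0
  | PSnd => pair 4 0 | POrc => pair 5 0
  | PPair p q => pair 6 (pair (cp p) (cp q))
  | PComp p q => pair 7 (pair (cp p) (cp q))
  | PRec p q => pair 8 (pair (cp p) (cp q))
  | PMin p => pair 9 (cp p)
  end.

Definition Ev md c x K := pair 0 (pair md (pair c (pair x K))).
Definition Rt v K := pair 1 (pair v K).
Definition KP1 md q x := pair 1 (pair md (pair q x)).
Definition KP2 a := pair 2 a.
Definition KC md p := pair 3 (pair md p).
Definition KR md q a k := pair 4 (pair md (pair q (pair a k))).
Definition KM md p x n := pair 5 (pair md (pair p (pair x n))).

Definition sMD s := u1 (u2 s).
Definition sC s := u1 (u2 (u2 s)).
Definition sX s := u1 (u2 (u2 (u2 s))).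
Definition sK s := u2 (u2 (u2 (u2 s))).
Definition rV s := u1 (u2 s).
Definition rK s := u2 (u2 s).
Definition rK' s := u2 (rK s).
Definition fT s := u1 (u1 (rK s)).
Definition fD s := u2 (u1 (rK s)).

Definition step (O : nat -> nat) (pg ph0 P : nat) (s : nat) : nat :=
  if u1 s == 0 then
    if u1 (sC s) == 0 then Rt 0 (sK s)
    else if u1 (sC s) == 1 then Rt (sX s).+1 (sK s)
    else if u1 (sC s) == 2 then Rt (sX s) (sK s)
    else if u1 (sC s) == 3 then Rt (u1 (sX s)) (sK s)
    else if u1 (sC s) == 4 then Rt (u2 (sX s)) (sK s)
    else if u1 (sC s) == 5 then
      (if sMD s == 0 then Rt (O (sX s)) (sK s)
       else if odd (sX s) then
         (if u2 (sMD s).-1 == 0 then Ev 0 ph0 (sX s)./2 (sK s)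
          else Ev (pair pg (u2 (sMD s).-1).-1).+1 P (sX s)./2 (sK s))
       else Ev 0 (u1 (sMD s).-1) (sX s)./2 (sK s))
    else if u1 (sC s) == 6 then
      Ev (sMD s) (u1 (u2 (sC s))) (sX s) (pair (KP1 (sMD s) (u2 (u2 (sC s))) (sX s)) (sK s))
    else if u1 (sC s) == 7 then
      Ev (sMD s) (u2 (u2 (sC s))) (sX s) (pair (KC (sMD s) (u1 (u2 (sC s)))) (sK s))
    else if u1 (sC s) == 8 then
      (if u2 (sX s) == 0 then Ev (sMD s) (u1 (u2 (sC s))) (u1 (sX s)) (sK s)
       else Ev (sMD s) (sC s) (pair (u1 (sX s)) (u2 (sX s)).-1)
              (pair (KR (sMD s) (u2 (u2 (sC s))) (u1 (sX s)) (u2 (sX s)).-1) (sK s)))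
    else Ev (sMD s) (u2 (sC s)) (pair (sX s) 0) (pair (KM (sMD s) (u2 (sC s)) (sX s) 0) (sK s))
  else
    if rK s == 0 then s
    else if fT s == 1 then
      Ev (u1 (fD s)) (u1 (u2 (fD s))) (u2 (u2 (fD s))) (pair (KP2 (rV s)) (rK' s))
    else if fT s == 2 then Rt (pair (fD s) (rV s)) (rK' s)
    else if fT s == 3 then Ev (u1 (fD s)) (u2 (fD s)) (rV s) (rK' s)
    else if fT s == 4 then
      Ev (u1 (fD s)) (u1 (u2 (fD s))) (pair (u1 (u2 (u2 (fD s)))) (pair (u2 (u2 (u2 (fD s)))) (rV s))) (rK' s)
    else if rV s == 0 then Rt (u2 (u2 (u2 (fD s)))) (rK' s)
    else Ev (u1 (fD s)) (u1 (u2 (fD s))) (pair (u1 (u2 (u2 (fD s)))) (u2 (u2 (u2 (fD s)))).+1)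
           (pair (KM (u1 (fD s)) (u1 (u2 (fD s))) (u1 (u2 (u2 (fD s)))) (u2 (u2 (u2 (fD s)))).+1) (rK' s)).

Ltac solve_comp := repeat first [ exact: comp_id | exact: comp_const
  | apply: comp_ifeq | apply: comp_ifodd | apply: comp_u1 | apply: comp_u2 | apply: comp_pair
  | apply: comp_succ | apply: comp_pred | apply: comp_half | apply: comp_orc ].

Lemma comp_step O pg ph0 P : pc O (step O pg ph0 P).
Proof.
rewrite /step /Ev /Rt /KP1 /KP2 /KC /KR /KM /sMD /sC /sX /sK /rV /rK /rK' /fT /fD.
solve_comp.
Qed.


Lemma pair_eq0 x y : (pair x y == 0) = (x == 0) && (y == 0).
Proof.
apply/eqP/andP => [h|[/eqP -> /eqP ->]] //.
by rewrite -pair00 in h; case: (pair_inj h) => -> ->.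
Qed.

Lemma st_zero O a b c md x K : step O a b c (Ev md (cp PZero) x K) = Rt 0 K.
Proof. rewrite /step /Ev /Rt /KP1 /KP2 /KC /KR /KM /rK' /fT /fD /sMD /sC /sX /sK /rV /rK.
  repeat (first [rewrite u1_pair | rewrite u2_pair | rewrite pair_eq0]). simpl. done. Qed.
Lemma st_succ O a b c md x K : step O a b c (Ev md (cp PSucc) x K) = Rt x.+1 K.
Proof. rewrite /step /Ev /Rt /KP1 /KP2 /KC /KR /KM /rK' /fT /fD /sMD /sC /sX /sK /rV /rK.
  repeat (first [rewrite u1_pair | rewrite u2_pair | rewrite pair_eq0]). simpl. done. Qed.
Lemma st_id O a b c md x K : step O a b c (Ev md (cp PId) x K) = Rt x K.
Proof. rewrite /step /Ev /Rt /KP1 /KP2 /KC /KR /KM /rK' /fT /fD /sMD /sC /sX /sK /rV /rK.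
  repeat (first [rewrite u1_pair | rewrite u2_pair | rewrite pair_eq0]). simpl. done. Qed.
Lemma st_fst O a b c md x y K : step O a b c (Ev md (cp PFst) (pair x y) K) = Rt x K.
Proof. rewrite /step /Ev /Rt /KP1 /KP2 /KC /KR /KM /rK' /fT /fD /sMD /sC /sX /sK /rV /rK.
  repeat (first [rewrite u1_pair | rewrite u2_pair | rewrite pair_eq0]). simpl. done. Qed.
Lemma st_snd O a b c md x y K : step O a b c (Ev md (cp PSnd) (pair x y) K) = Rt y K.
Proof. rewrite /step /Ev /Rt /KP1 /KP2 /KC /KR /KM /rK' /fT /fD /sMD /sC /sX /sK /rV /rK.
  repeat (first [rewrite u1_pair | rewrite u2_pair | rewrite pair_eq0]). simpl. done. Qed.
Lemma st_orc0 O a b c x K : step O a b c (Ev 0 (cp POrc) x K) = Rt (O x) K.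
Proof. rewrite /step /Ev /Rt /KP1 /KP2 /KC /KR /KM /rK' /fT /fD /sMD /sC /sX /sK /rV /rK.
  repeat (first [rewrite u1_pair | rewrite u2_pair | rewrite pair_eq0]). simpl. done. Qed.
Lemma st_orcM O pg ph0 P q j x K : step O pg ph0 P (Ev (pair q j).+1 (cp POrc) x K) =
  if odd x then (if j == 0 then Ev 0 ph0 x./2 K else Ev (pair pg j.-1).+1 P x./2 K)
  else Ev 0 q x./2 K.
Proof. rewrite /step /Ev /Rt /KP1 /KP2 /KC /KR /KM /rK' /fT /fD /sMD /sC /sX /sK /rV /rK.
  repeat (first [rewrite u1_pair | rewrite u2_pair | rewrite pair_eq0]). simpl. done. Qed.
Lemma st_pair O a b c md p q x K : step O a b c (Ev md (cp (PPair p q)) x K) =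
  Ev md (cp p) x (pair (KP1 md (cp q) x) K).
Proof. rewrite /step /Ev /Rt /KP1 /KP2 /KC /KR /KM /rK' /fT /fD /sMD /sC /sX /sK /rV /rK.
  repeat (first [rewrite u1_pair | rewrite u2_pair | rewrite pair_eq0]). simpl. done. Qed.
Lemma st_comp O a b c md p q x K : step O a b c (Ev md (cp (PComp p q)) x K) =
  Ev md (cp q) x (pair (KC md (cp p)) K).
Proof. rewrite /step /Ev /Rt /KP1 /KP2 /KC /KR /KM /rK' /fT /fD /sMD /sC /sX /sK /rV /rK.
  repeat (first [rewrite u1_pair | rewrite u2_pair | rewrite pair_eq0]). simpl. done. Qed.
Lemma st_rec0 O a b c md p q y K : step O a b c (Ev md (cp (PRec p q)) (pair y 0) K) =
  Ev md (cp p) y K.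
Proof. rewrite /step /Ev /Rt /KP1 /KP2 /KC /KR /KM /rK' /fT /fD /sMD /sC /sX /sK /rV /rK.
  repeat (first [rewrite u1_pair | rewrite u2_pair | rewrite pair_eq0]). simpl. done. Qed.
Lemma st_recS O a b c md p q y k K : step O a b c (Ev md (cp (PRec p q)) (pair y k.+1) K) =
  Ev md (cp (PRec p q)) (pair y k) (pair (KR md (cp q) y k) K).
Proof. rewrite /step /Ev /Rt /KP1 /KP2 /KC /KR /KM /rK' /fT /fD /sMD /sC /sX /sK /rV /rK.
  repeat (first [rewrite u1_pair | rewrite u2_pair | rewrite pair_eq0]). simpl. done. Qed.
Lemma st_min O a b c md p x K : step O a b c (Ev md (cp (PMin p)) x K) =
  Ev md (cp p) (pair x 0) (pair (KM md (cp p) x 0) K).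
Proof. rewrite /step /Ev /Rt /KP1 /KP2 /KC /KR /KM /rK' /fT /fD /sMD /sC /sX /sK /rV /rK.
  repeat (first [rewrite u1_pair | rewrite u2_pair | rewrite pair_eq0]). simpl. done. Qed.
Lemma st_kp1 O a b c md q x v K : step O a b c (Rt v (pair (KP1 md q x) K)) =
  Ev md q x (pair (KP2 v) K).
Proof. rewrite /step /Ev /Rt /KP1 /KP2 /KC /KR /KM /rK' /fT /fD /sMD /sC /sX /sK /rV /rK.
  repeat (first [rewrite u1_pair | rewrite u2_pair | rewrite pair_eq0]). simpl. done. Qed.
Lemma st_kp2 O a b c w v K : step O a b c (Rt v (pair (KP2 w) K)) = Rt (pair w v) K.
Proof. rewrite /step /Ev /Rt /KP1 /KP2 /KC /KR /KM /rK' /fT /fD /sMD /sC /sX /sK /rV /rK.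
  repeat (first [rewrite u1_pair | rewrite u2_pair | rewrite pair_eq0]). simpl. done. Qed.
Lemma st_kc O a b c md p v K : step O a b c (Rt v (pair (KC md p) K)) = Ev md p v K.
Proof. rewrite /step /Ev /Rt /KP1 /KP2 /KC /KR /KM /rK' /fT /fD /sMD /sC /sX /sK /rV /rK.
  repeat (first [rewrite u1_pair | rewrite u2_pair | rewrite pair_eq0]). simpl. done. Qed.
Lemma st_kr O a b c md q y k v K : step O a b c (Rt v (pair (KR md q y k) K)) =
  Ev md q (pair y (pair k v)) K.
Proof. rewrite /step /Ev /Rt /KP1 /KP2 /KC /KR /KM /rK' /fT /fD /sMD /sC /sX /sK /rV /rK.
  repeat (first [rewrite u1_pair | rewrite u2_pair | rewrite pair_eq0]). simpl. done. Qed.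
Lemma st_km O a b c md p x n v K : step O a b c (Rt v (pair (KM md p x n) K)) =
  if v == 0 then Rt n K else Ev md p (pair x n.+1) (pair (KM md p x n.+1) K).
Proof. rewrite /step /Ev /Rt /KP1 /KP2 /KC /KR /KM /rK' /fT /fD /sMD /sC /sX /sK /rV /rK.
  repeat (first [rewrite u1_pair | rewrite u2_pair | rewrite pair_eq0]). simpl. by case: (v == 0). Qed.
Lemma st_halt O a b c v : step O a b c (Rt v 0) = Rt v 0.
Proof. rewrite /step /Ev /Rt /KP1 /KP2 /KC /KR /KM /rK' /fT /fD /sMD /sC /sX /sK /rV /rK.
  repeat (first [rewrite u1_pair | rewrite u2_pair | rewrite pair_eq0]). simpl. done. Qed.


Definition reach (f : nat -> nat) s t := exists n, iter n f s = t.
Lemma reach_refl f s : reach f s s. Proof. by exists 0. Qed.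
Lemma reach_trans f s t u : reach f s t -> reach f t u -> reach f s u.
Proof. move=> [n h1] [m h2]; exists (m + n); by rewrite iterD h1 h2. Qed.
Lemma reach_step f s s' t : f s = s' -> reach f s' t -> reach f s t.
Proof. move=> e [n h]; exists n.+1; by rewrite iterSr e. Qed.

Lemma gen O pg ph0 P md (g : nat -> nat)
  (HO : forall m K, reach (step O pg ph0 P) (Ev md (cp POrc) m K) (Rt (g m) K)) :
  forall p x v, eval g p x v -> forall K, reach (step O pg ph0 P) (Ev md (cp p) x K) (Rt v K).
Proof.
apply: eval_ind2.
- move=> x K; apply: reach_step; [exact: st_zero | exact: reach_refl].
- move=> x K; apply: reach_step; [exact: st_succ | exact: reach_refl].
- move=> x K; apply: reach_step; [exact: st_id | exact: reach_refl].
- move=> x y K; apply: reach_step; [exact: st_fst | exact: reach_refl].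
- move=> x y K; apply: reach_step; [exact: st_snd | exact: reach_refl].
- exact: HO.
- move=> p q x a b _ IH1 _ IH2 K.
  apply: reach_step; first exact: st_pair.
  apply: reach_trans; first exact: IH1.
  apply: reach_step; first exact: st_kp1.
  apply: reach_trans; first exact: IH2.
  apply: reach_step; [exact: st_kp2 | exact: reach_refl].
- move=> p q x y z _ IH1 _ IH2 K.
  apply: reach_step; first exact: st_comp.
  apply: reach_trans; first exact: IH1.
  apply: reach_step; first exact: st_kc.
  exact: IH2.
- move=> p q a v _ IH K.
  apply: reach_step; first exact: st_rec0. exact: IH.
- move=> p q a k w v _ IH1 _ IH2 K.
  apply: reach_step; first exact: st_recS.
  apply: reach_trans; first exact: IH1.
  apply: reach_step; first exact: st_kr.
  exact: IH2.
- move=> p x n _ IH H K.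
  have hm : forall m, m <= n -> reach (step O pg ph0 P) (Ev md (cp (PMin p)) x K)
              (Ev md (cp p) (pair x m) (pair (KM md (cp p) x m) K)).
    elim=> [|m IHm] hmn.
    + apply: reach_step; [exact: st_min | exact: reach_refl].
    + apply: reach_trans; first exact: IHm (ltnW hmn).
      case: (H m hmn) => v [hv [_ Qv]].
      apply: reach_trans; first exact: Qv.
      apply: reach_step; first exact: st_km.
      have -> : (v == 0) = false by apply/eqP.
      exact: reach_refl.
  apply: reach_trans; first exact: hm n (leqnn n).
  apply: reach_trans; first exact: IH.
  apply: reach_step; first exact: st_km.
  exact: reach_refl.
Qed.


Lemma mode0 O a b c p x v : eval O p x v ->
  forall K, reach (step O a b c) (Ev 0 (cp p) x K) (Rt v K).
Proof.
move=> d; apply: (gen _ d) => m K.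
apply: reach_step; [exact: st_orc0 | exact: reach_refl].
Qed.

Lemma prf_iter (b f : nat -> nat) a k :
  prf b (fun t => f (u2 (u2 t))) a k = iter k f (b a).
Proof. elim: k => //= k ->. by rewrite !u2_pair. Qed.

Lemma halted_abs f v1 v2 t1 t2 s :
  (forall v, f (Rt v 0) = Rt v 0) ->
  iter t1 f s = Rt v1 0 -> iter t2 f s = Rt v2 0 -> v1 = v2.
Proof.
move=> hf.
have key : forall t1 t2 v1 v2, t1 <= t2 -> iter t1 f s = Rt v1 0 -> iter t2 f s = Rt v2 0 -> v1 = v2.
  move=> a b x y hab ha hb. rewrite -(subnK hab) iterD ha in hb.
  have : iter (b - a) f (Rt x 0) = Rt x 0 by elim: (b - a) => //= n ->; exact: hf.
  rewrite hb /Rt => e. by case: (pair_inj e) => _ /pair_inj [] -> _.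
case: (leqP t1 t2) => h h1 h2; first exact: key h h1 h2.
symmetry; exact: key (ltnW h) h2 h1.
Qed.

Lemma iterate_comp (O : nat -> nat) (pg ph0 pw P P' : prog) (g w : nat -> nat)
  (h : nat -> nat -> nat) (r : nat -> nat) (p0 : nat) :
  (forall y, eval O pg y (g y)) -> (forall y, eval O ph0 y (h 0 y)) ->
  (forall y, eval O pw y (w y)) ->
  (forall j y, eval (join g (h j)) P y (h j.+1 y)) ->
  (forall n, eval (join w (h n)) P' p0 (r n)) ->
  exists Q, forall n, eval O Q n (r n).
Proof.
move=> Hg Hh0 Hw HP HP'.
set stp := step O (cp pg) (cp ph0) (cp P).
pose Hst j y K := if j == 0 then Ev 0 (cp ph0) y K else Ev (pair (cp pg) j.-1).+1 (cp P) y K.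
have lev : forall j y K, reach stp (Hst j y K) (Rt (h j y) K).
  elim=> [|j IH] y K; first exact: mode0.
  rewrite /Hst /=. apply: (gen _ (HP j y)) => m K'.
  apply: reach_step; first exact: st_orcM.
  rewrite /join; case: (odd m); first exact: IH.
  exact: mode0.
pose init n := Ev (pair (cp pw) n).+1 (cp P') p0 0.
have top : forall n, reach stp (init n) (Rt (r n) 0).
  move=> n; apply: (gen _ (HP' n)) => m K'.
  apply: reach_step; first exact: st_orcM.
  rewrite /join; case: (odd m); first exact: lev.
  exact: mode0.
pose run z := iter (u2 z) stp (init (u1 z)).
have hrun : pc O run.
  have : pc O (fun z => prf init (fun t => stp (u2 (u2 t))) (u1 z) (u2 z)).
    apply: comp_prf0.
    - rewrite /init /Ev. solve_comp.
    - apply: (comp_comp (comp_step _ _ _ _)). solve_comp.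
  by apply: comp_ext => z; rewrite prf_iter.
pose T z := if u1 (run z) == 1 then (if u2 (u2 (run z)) == 0 then 0 else 1) else 1.
have hT : pc O T.
  rewrite /T. apply: comp_ifeq; [apply: comp_u1; exact: hrun | exact: comp_const | | exact: comp_const].
  apply: comp_ifeq; [apply: comp_u2; apply: comp_u2; exact: hrun | exact: comp_const | exact: comp_const | exact: comp_const].
pose F z := u1 (u2 (run z)).
have hF : pc O F by apply: comp_u1; apply: comp_u2; exact: hrun.
case: hT => pT hpT. case: hF => pF hpF.
exists (PComp pF (PPair PId (PMin pT))) => n.
have ex : exists t, T (pair n t) == 0.
  case: (top n) => t ht. exists t. by rewrite /T /run u1_pair u2_pair ht /Rt !u1_pair !u2_pair.
have Tdef : forall t, T (pair n t) = 0 -> run (pair n t) = Rt (F (pair n t)) 0.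
  move=> t. rewrite /T /F. case: eqP => // e1. case: eqP => // e2 _.
  by rewrite /Rt -{1}e1 -{1}e2 !pair_u.
pose ts := ex_minn ex.
have [hts hmin] : T (pair n ts) == 0 /\ forall m, T (pair n m) == 0 -> ts <= m.
  rewrite /ts; case: ex_minnP => m h1 h2; by split.
econstructor.
- constructor; first constructor.
  apply: ev_min; first by rewrite -(eqP hts); exact: hpT.
  move=> m hm. exists (T (pair n m)); split; last exact: hpT.
  move=> e. have := hmin m (introT eqP e). by rewrite leqNgt hm.
- have -> : r n = F (pair n ts); last exact: hpF.
  case: (top n) => t ht.
  apply: (@halted_abs stp _ _ t ts (init n)); first by move=> v; exact: st_halt.
  + exact: ht.
  + have := Tdef ts (eqP hts). by rewrite /run u1_pair u2_pair.
Qed.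

From Stdlib Require Import FunctionalExtensionality PropExtensionality Classical.

Lemma pred_ext (A B : nat -> Prop) : (forall n, A n <-> B n) -> A = B.
Proof. move=> h; apply: functional_extensionality => n; apply: propositional_extensionality; exact: h. Qed.

Lemma ce_ext (A B : nat -> Prop) : (forall n, A n <-> B n) -> ce A -> ce B.
Proof. by move=> /pred_ext ->. Qed.

Lemma ce_dec (T : nat -> nat) : pc (fun _ => 0) T -> ce (fun x => T x = 0).
Proof.
move=> [pT hT]; exists (PMin (PComp pT PFst)) => x; split.
- move=> e; exists 0; apply: ev_min => //.
  econstructor; first constructor. by have := hT x; rewrite e.
- case=> v h; inversion h; subst.
  match goal with H : eval _ (PComp _ _) _ 0 |- _ => inversion H; subst end.
  match goal with H : eval _ PFst _ _ |- _ => inversion H; subst end.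
  pinj. match goal with H : eval _ pT _ 0 |- _ => exact: (eval_det (hT _) H) end.
Qed.

Lemma pow2E k : prf (fun _ => 1) (fun t => u2 (u2 t) + u2 (u2 t)) 0 k = 2 ^ k.
Proof. elim: k => //= k IH. rewrite !u2_pair IH expnS. lia. Qed.

Lemma comp_pow2 O F : pc O F -> pc O (fun s => 2 ^ (F s)).
Proof.
move=> hF. have : pc O (fun s => prf (fun _ => 1) (fun t => u2 (u2 t) + u2 (u2 t)) 0 (F s)).
  apply: comp_prf; [exact: comp_const | | exact: comp_const | exact: hF].
  apply: comp_add; apply: comp_u2; apply: comp_u2; exact: comp_id.
by apply: comp_ext => x; rewrite pow2E.
Qed.

Definition Aset (x : nat) : Prop := 1 <= u1 x /\ u2 x = 2 ^ (u1 x).-1.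
Definition Vset (x : nat) : Prop := 1 <= u2 x /\ u2 (u1 x) = u2 x.

Lemma ce_A : ce Aset.
Proof.
have h : pc (fun _ => 0) (fun z => if u1 z == 0 then 1 else if u2 z == 2 ^ (u1 z).-1 then 0 else 1).
  apply: comp_ifeq; [apply: comp_u1; exact: comp_id | exact: comp_const | exact: comp_const | ].
  apply: comp_ifeq; [apply: comp_u2; exact: comp_id | apply: comp_pow2; apply: comp_pred; apply: comp_u1; exact: comp_id | exact: comp_const | exact: comp_const].
apply: ce_ext (ce_dec h) => x; rewrite /Aset.
case: eqP => [->|h1]; first by split => // -[].
case: eqP => [e|ne]; split => //; last by case.
move=> _; split => //; lia.

Qed.

Lemma ce_V : ce Vset.
Proof.
have h : pc (fun _ => 0) (fun z => if u2 z == 0 then 1 else if u2 (u1 z) == u2 z then 0 else 1).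
  apply: comp_ifeq; [apply: comp_u2; exact: comp_id | exact: comp_const | exact: comp_const | ].
  apply: comp_ifeq; [apply: comp_u2; apply: comp_u1; exact: comp_id | apply: comp_u2; exact: comp_id | exact: comp_const | exact: comp_const].
apply: ce_ext (ce_dec h) => x; rewrite /Vset.
case: eqP => [->|h1]; first by split => // -[].
case: eqP => [e|ne]; split => //; last by case.
move=> _; split => //; lia.
Qed.

Lemma ce_T : ce (fun _ => True).
Proof. apply: ce_ext (ce_dec (comp_const _ 0)) => x; by split. Qed.
Lemma ce_F : ce (fun _ => False).
Proof. apply: ce_ext (ce_dec (comp_const _ 1)) => x; by split. Qed.
Lemma ce_S0 : ce (fun x => x = 0).
Proof. apply: ce_ext (ce_dec (comp_id _)) => x; by split. Qed.

Lemma Dmem_pow j i : Dmem (2 ^ j) i <-> i = j.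
Proof.
rewrite /Dmem; split => [|->]; last by rewrite divnn expn_gt0.
case: (ltngtP i j) => // h.
- rewrite -(subnK (ltnW h)) expnD mulnK ?expn_gt0 //.
  by rewrite -(subnSK h) expnS oddM.
- by rewrite divn_small ?ltn_exp2l.
Qed.

Lemma Dnonempty u : 1 <= u -> exists i, Dmem u i.
Proof.
elim: u {-2}u (leqnn u) => [|n IH] u hu h1; first by case: u hu h1.
case odu: (odd u); first by exists 0; rewrite /Dmem expn0 divn1.
have hu2 : u = (u./2).*2 by rewrite -[LHS]odd_double_half odu.
have : 1 <= u./2 by move: h1; rewrite {1}hu2; case: (u./2).
case/(IH _ _) => [|i hi]; first by move: hu; rewrite {1}hu2 -addnn; lia.
exists i.+1. by rewrite /Dmem expnS divnMA divn2.
Qed.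


Theorem theorem7p13 (X Y : nat -> bool) :
  (exists f : (nat -> Prop) -> (nat -> nat), pca_embedding X Y f) ->
  forall Z : nat -> Prop, enum_le Z X -> Ycomputable_set Y Z.
Proof.
move=> [f [Hc Hinj Happ]] Z [R [[p Rp] HZ]].
pose S (n : nat) := fun x : nat => x = n.
have eS : forall n, S n.+1 = gapp Aset (S n).
  move=> n; apply: pred_ext => m; rewrite /gapp /S; split.
  - move=> ->; exists (2 ^ n); rewrite /Aset u1_pair u2_pair; split; first by split.
    by move=> i /Dmem_pow.
  - move=> [u []]; rewrite /Aset u1_pair u2_pair => -[h1 ->] hD.
    have := hD _ (proj2 (Dmem_pow _ _) erefl). lia.
have gS : forall n, GX X (S n).
  elim=> [|n IH]; first exact: GX_ce _ ce_S0.
  apply: (GX_app (GX_ce _ ce_A) IH) => m; by rewrite eS.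
pose C (x : nat) := R (u1 x) (u2 x).
have gC : GX X C.
  apply: GX_ce; exists p => x; rewrite /C Rp; split => -[v h]; exists v; by rewrite ?pair_u in h *.
have gZ : GX X Z.
  apply: (GX_app gC (GX_X (A := fun n => X n) _)) => // n.
  rewrite HZ /gapp /C. split => -[u hu]; exists u; by rewrite ?u1_pair ?u2_pair in hu *.
pose W := gapp Vset Z.
have gW : GX X W by apply: (GX_app (GX_ce _ ce_V) gZ).
have eD : forall n, gapp W (S n) = (fun _ => Z n).
  move=> n; apply: pred_ext => k; rewrite /gapp /W /Vset /S; split.
  - move=> [u [[u' [[h1 h2] hD]] hS]]. rewrite !u1_pair !u2_pair in h1 h2.
    subst u'. case: (Dnonempty h1) => i hi. have := hS _ hi. move=> e; subst i. exact: hD.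
  - move=> hz. exists (2 ^ n); split.
    + exists (2 ^ n); rewrite !u1_pair !u2_pair; split; first by split; rewrite ?expn_gt0.
      by move=> i /Dmem_pow ->.
    + by move=> i /Dmem_pow.
have gT : GX X (fun _ => True) by apply: GX_ce _ ce_T.
have gF : GX X (fun _ => False) by apply: GX_ce _ ce_F.
have [p0 hp0] : exists p0, f (fun _ => True) p0 <> f (fun _ => False) p0.
  apply: NNPP => hn.
  have e : forall n, f (fun _ => True) n = f (fun _ => False) n.
    move=> n; apply: NNPP => hne; apply: hn; by exists n.
  by case: (Hinj _ _ gT gF e 0) => /(_ I).
case: (Hc _ (GX_ce _ ce_A)) => pg Hg.
case: (Hc _ (gS 0)) => ph0 Hh0.
case: (Hc _ gW) => pw Hw.
have HP : forall j y, eval (join (f Aset) (f (S j))) (Phi (f Aset 0)) y (f (S j.+1) y).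
  move=> j y. rewrite eS. exact: (Happ _ _ (GX_ce _ ce_A) (gS j) y).
have HP' : forall n, eval (join (f W) (f (S n))) (Phi (f W 0)) p0 (f (gapp W (S n)) p0).
  move=> n. exact: (Happ _ _ gW (gS n) p0).
have [Q HQ] := iterate_comp (h := fun j => f (S j)) (r := fun n => f (gapp W (S n)) p0) Hg Hh0 Hw HP HP'.
have [pA HA] : pc (chi Y) (fun v => if v == f (fun _ => True) p0 then 1 else 0).
  by apply: comp_ifeq; [exact: comp_id | exact: comp_const | exact: comp_const | exact: comp_const].
exists (PComp pA Q) => n; split => hz.
- econstructor; first exact: HQ.
  have := HA (f (gapp W (S n)) p0). rewrite eD.
  have -> : (fun _ : nat => Z n) = (fun _ => True) by apply: pred_ext.
  by rewrite eqxx.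
- econstructor; first exact: HQ.
  have := HA (f (gapp W (S n)) p0). rewrite eD.
  have -> : (fun _ : nat => Z n) = (fun _ => False) by apply: pred_ext.
  case: eqP => // e. by rewrite e in hp0.
Qed.
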